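(* Let $r\ge 2$ and $m$ be integers with $3\le m\le 6$. Then for every integer $n\ge m-1$, $$F_{n+2,r}\equiv F_{n,r}\pmod{2^m},$$ i.e. from the term of index $m-1$ onward the sequence $(F_{n,r}\bmod 2^m)_{n\ge0}$ is periodic with period $2$.
   Context: For positive integers $r\le m\le n$, $S_r(n,m)$ denotes the $r$-Stirling number of the second kind: the number of partitions of $\{1,\dots,n\}$ into $m$ non-empty blocks such that $1,\dots,r$ lie in pairwise distinct blocks. For a positive integer $r$ and integer $n\ge 0$, the $r$-Fubini number is $F_{n,r}=\sum_{k=0}^{n}(k+r)!\,S_r(n+r,k+r)$. *)

(* Defs.v *)
From mathcomp Require Import all_boot.
Set Implicit Arguments. Unset Strict Implicit. Unset Printing Implicit Defensive.

(* r-Stirling number of the second kind S_r(n,m): the number of partitions of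
   {1,...,n} (here modelled as 'I_n = {0,...,n-1}, with element i+1 <-> i)
   into m non-empty blocks such that 1,...,r (here 0,...,r-1) lie in pairwise
   distinct blocks.  MathComp's [partition P D] requires blocks non-empty,
   pairwise disjoint and covering D. *)
Definition rstirling2 (r n m : nat) : nat :=
  #|[set P : {set {set 'I_n}} |
      [&& partition P [set: 'I_n], #|P| == m &
          [forall i : 'I_n, forall j : 'I_n,
             [&& i < r, j < r & i != j] ==> (pblock P i != pblock P j)]]]|.

Definition rfubini (n r : nat) : nat :=
  \sum_(0 <= k < n.+1) (k + r)`! * rstirling2 r (n + r) (k + r).

(* Main.v *)
Require Import Defs.
From mathcomp Require Import all_boot zify.
Set Implicit Arguments. Unset Strict Implicit. Unset Printing Implicit Defensive.

Section Comb.
Variables (T : finType) (v : T -> nat) (r : nat).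

Definition rc (P : {set {set T}}) : bool :=
  [forall B : {set T}, (B \in P) ==> [forall i, [forall j,
     [&& i \in B, j \in B, v i < r & v j < r] ==> (i == j)]]].

Definition Vs (D : {set T}) (m : nat) :=
  [set P : {set {set T}} | [&& partition P D, #|P| == m & rc P]].

Lemma rcP (P : {set {set T}}) : reflect (forall B i j, B \in P -> i \in B -> j \in B -> v i < r -> v j < r -> i = j) (rc P).
Proof.
apply: (iffP forallP) => [H B i j BP iB jB vi vj | H B].
  have := H B; rewrite BP /= => /forallP /(_ i) /forallP /(_ j).
  by rewrite iB jB vi vj /= => /eqP.
apply/implyP => BP; apply/forallP => i; apply/forallP => j.
apply/implyP => /and4P [iB jB vi vj]; apply/eqP; exact: H B i j BP iB jB vi vj.
Qed.

Lemma rc_sub (P Q : {set {set T}}) : (forall B, B \in Q -> exists2 B', B' \in P & B \subset B') -> rc P -> rc Q.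
Proof.
move=> hs /rcP hP; apply/rcP => B i j BQ iB jB vi vj.
have [B' B'P /subsetP sB] := hs B BQ.
exact: hP B' i j B'P (sB _ iB) (sB _ jB) vi vj.
Qed.

Lemma card_V0 m : #|Vs set0 m| = (m == 0).
Proof.
have -> : Vs set0 m = if m == 0 then [set set0] else set0.
  apply/setP => P; rewrite !inE partition_set0.
  case: (eqVneq P set0) => [->|nP] /=.
    rewrite cards0; case: m => [|m] /=; last by rewrite inE.
    rewrite inE eqxx; apply/rcP => B i j; by rewrite inE.
  by case: (m == 0); rewrite ?inE ?(negbTE nP).
by case: (m == 0); rewrite ?cards1 ?cards0.
Qed.

Lemma card_VS0 x D : #|Vs (x |: D) 0| = 0.
Proof.
apply/eqP; rewrite cards_eq0; apply/eqP/setP => P; rewrite !inE.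
apply/negbTE/negP => /and3P [pP c0 _]; move: c0; rewrite cards_eq0 => /eqP P0.
have := cover_partition pP; rewrite P0 /cover big_set0 => /setP /(_ x).
by rewrite !inE eqxx.
Qed.


Section Rec.
Variables (x : T) (D : {set T}).
Hypothesis xD : x \notin D.
Hypothesis vD : {in D, forall y, v y < v x}.

Lemma notx Q : partition Q D -> [set x] \notin Q.
Proof.
move=> pQ; apply/negP => xQ; have /subsetP := partitionS pQ xQ.
by move=> /(_ x); rewrite inE eqxx => /(_ isT); apply/negP.
Qed.

Lemma part_sing m : #|Vs (x |: D) m.+1 :&: [set P : {set {set T}} | [set x] \in P]| = #|Vs D m|.
Proof.
have -> : Vs (x |: D) m.+1 :&: [set P : {set {set T}} | [set x] \in P] = (fun Q => [set x] |: Q) @: Vs D m.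
  apply/setP => P; apply/idP/imsetP.
    rewrite !inE => /andP [/and3P [pP /eqP cP rP] xP].
    exists (P :\ [set x]); last by rewrite setD1K.
    rewrite !inE; apply/and3P; split.
    - by have := partitionD1 pP xP; rewrite setU1K.
    - by move: cP; rewrite (cardsD1 [set x] P) xP add1n => -[->].
    - apply: rc_sub rP => B; rewrite inE => /andP [_ BP]; exists B => //.
  case=> Q; rewrite !inE => /and3P [pQ /eqP cQ rQ] ->.
  rewrite setU11 andbT; apply/and3P; split.
  - apply: partitionU1 => //; first by apply/set0Pn; exists x; rewrite inE.
    rewrite disjoint_sym; apply/pred0P => y /=; rewrite !inE.
    by apply/negbTE/andP => -[yD /eqP yx]; move: xD; rewrite -yx yD.
  - by rewrite cardsU1 (notx pQ) cQ.
  - apply/rcP => B i j; case/setU1P => [-> | BQ].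
      by rewrite !inE => /eqP -> /eqP ->.
    by move/rcP: rQ; apply.
rewrite card_in_imset // => Q1 Q2; rewrite !inE => /and3P [p1 _ _] /and3P [p2 _ _] e.
by rewrite -(setU1K (notx p1)) e setU1K // notx.
Qed.

Definition ins (p : {set {set T}} * {set T}) := (x |: p.2) |: (p.1 :\ p.2).
Definition res (P : {set {set T}}) :=
  ((pblock P x :\ x) |: (P :\ pblock P x), pblock P x :\ x).

Lemma ins_ok m p : r <= v x -> p.1 \in Vs D m.+1 -> p.2 \in p.1 ->
  [/\ ins p \in Vs (x |: D) m.+1, [set x] \notin ins p & res (ins p) = p].
Proof.
case: p => Q C /= rx; rewrite inE => /and3P [pQ /eqP cQ rQ] CQ.
have sCD := partitionS pQ CQ.
have xC : x \notin C by apply: contra xD; apply/subsetP.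
have nxQ : x |: C \notin Q :\ C.
  apply/negP => /setD1P [_ /(partitionS pQ) /subsetP /(_ x)].
  by rewrite setU11 => /(_ isT); apply/negP.
have pP : partition (ins (Q, C)) (x |: D).
  have := partitionU1 (partitionD1 pQ CQ) (B := x |: C).
  have -> : (x |: C) :|: (D :\: C) = x |: D.
    apply/setP => y; rewrite !inE; case: (y == x) => //=.
    by case yC: (y \in C) => //=; move/subsetP: sCD => /(_ y yC) ->.
  apply.
    by apply/set0Pn; exists x; rewrite setU11.
  rewrite -setI_eq0; apply/eqP/setP => y; rewrite !inE.
  by case: (eqVneq y x) => [->|] /=; [rewrite (negbTE xD) andbF | case: (y \in C)].
have Cn0 : C != set0 by apply: (partition_neq0 pQ CQ).
have pb : pblock (ins (Q, C)) x = x |: C.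
  by apply: def_pblock (partition_trivIset pP) _ _; rewrite ?setU11.
split.
- rewrite inE pP /=; apply/andP; split.
    by rewrite /ins /= cardsU1 nxQ (cardsD1 C Q) CQ in cQ *; rewrite -cQ.
  apply/rcP => B i j; case/setU1P => [-> | /setD1P [_ BQ]].
    rewrite !inE => /orP [/eqP -> | iC]; first by rewrite ltnNge rx.
    move=> /orP [/eqP -> | jC]; first by move=> _; rewrite ltnNge rx.
    by move/rcP: rQ => /(_ C i j CQ iC jC).
  by move/rcP: rQ; apply.
- apply/negP; rewrite /ins /=; case/setU1P => [e | /setD1P [_ xQ]]; last by move: (notx pQ); rewrite xQ.
  have [y yC] := set0Pn _ Cn0.
  have : y \in [set x] by rewrite e /= setU1r.
  rewrite inE => /eqP yx; by move: xC; rewrite -yx yC.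
- by rewrite /res pb setU1K // (setU1K nxQ) setD1K.
Qed.

Lemma res_ok m P : P \in Vs (x |: D) m.+1 -> [set x] \notin P ->
  [/\ (res P).1 \in Vs D m.+1, (res P).2 \in (res P).1, P = ins (res P)
     & exists2 y, y \in pblock P x & y \in D].
Proof.
rewrite inE => /and3P [pP /eqP cP rP] nsP.
set C0 := pblock P x; set C := C0 :\ x.
have xcov : x \in cover P by rewrite (cover_partition pP) setU11.
have C0P : C0 \in P := pblock_mem xcov.
have xC0 : x \in C0 by rewrite /C0 mem_pblock.
have sC0 := partitionS pP C0P.
have tP := partition_trivIset pP.
have Cn0 : C != set0.
  apply: contraNneq nsP => e; suff <- : C0 = [set x] by []; by rewrite -{1}(setD1K xC0) -/C e setU0.
have [y yC] := set0Pn _ Cn0.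
have yD : y \in D.
  move: yC; rewrite !inE => /andP [yx /(subsetP sC0)]; rewrite !inE; by case/orP => // h; move: yx; rewrite h.
have nCP : C \notin P :\ C0.
  apply/negP => /setD1P [CC0 CP]; move/negP: CC0; apply.
  have yC0 : y \in C0 by move: yC; rewrite inE => /andP [].
  by rewrite -(def_pblock tP CP yC) (def_pblock tP C0P yC0).
have pQ : partition (C |: (P :\ C0)) D.
  have := partitionU1 (partitionD1 pP C0P) Cn0.
  have -> : C :|: ((x |: D) :\: C0) = D.
    apply/setP => z; rewrite !inE; case: (eqVneq z x) => [->|zx] /=.
      by rewrite xC0 (negbTE xD).
    case zC: (z \in C0) => /=; last by [].
    move/subsetP: sC0 => /(_ z zC); rewrite !inE; by case/orP => // h; move: zx; rewrite (eqP h) eqxx.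
  apply; rewrite -setI_eq0; apply/eqP/setP => z; rewrite !inE.
  by case: (z \in C0); rewrite ?andbF ?andbT ?andbF.
split => //=.
- rewrite inE pQ /=; apply/andP; split.
    by rewrite cardsU1 nCP -cP (cardsD1 C0 P) C0P.
  apply: rc_sub rP => B; case/setU1P => [-> | /setD1P [_ BP]].
    by exists C0 => //; apply: subsetDl.
  by exists B.
- by rewrite setU11.
- by rewrite /ins /= setD1K // (setU1K nCP) setD1K.
- by exists y => //; move: yC; rewrite inE => /andP [].
Qed.

Lemma card_VS m :
  #|Vs (x |: D) m.+1| = (if r <= v x then m.+1 * #|Vs D m.+1| else 0) + #|Vs D m|.
Proof.
rewrite -(cardsID [set P : {set {set T}} | [set x] \in P] (Vs (x |: D) m.+1)).
rewrite part_sing addnC; congr (_ + _).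
case: ifP => rx; last first.
  apply/eqP; rewrite cards_eq0; apply/eqP/setP => P; rewrite in_set0.
  apply/negbTE/negP => /setDP [PV]; rewrite inE => nsP.
  have [_ _ _ [y yC yD]] := res_ok PV nsP.
  move: PV; rewrite inE => /and3P [pP _ /rcP rP].
  have xcov : x \in cover P by rewrite (cover_partition pP) setU11.
  have xC0 : x \in pblock P x by rewrite mem_pblock.
  have yx := rP _ _ _ (pblock_mem xcov) yC xC0.
  have vyx := vD yD; have vxr : v x < r by rewrite ltnNge rx.
  have e := yx (ltn_trans vyx vxr) vxr; move: xD; by rewrite -e yD.
set W := [set p : {set {set T}} * {set T} | (p.1 \in Vs D m.+1) && (p.2 \in p.1)].
have -> : Vs (x |: D) m.+1 :\: [set P : {set {set T}} | [set x] \in P] = ins @: W.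
  apply/setP => P; apply/idP/imsetP.
    case/setDP => PV; rewrite inE => nsP.
    have [h1 h2 h3 _] := res_ok PV nsP.
    by exists (res P) => //; rewrite inE h1 h2.
  case=> p; rewrite inE => /andP [h1 h2] ->.
  have [k1 k2 _] := ins_ok rx h1 h2.
  by rewrite in_setD k1 inE (negbTE k2).
rewrite card_in_imset; last first.
  move=> p1 p2; rewrite inE [in X in _ -> X]inE => /andP [a1 b1] /andP [a2 b2] e.
  have [_ _ <-] := ins_ok rx a1 b1; have [_ _ <-] := ins_ok rx a2 b2.
  by rewrite e.
rewrite mulnC -sum_nat_const.
transitivity (\sum_(Q in Vs D m.+1) #|Q|).
  rewrite -sum1_card (eq_bigl (fun p => (p.1 \in Vs D m.+1) && (p.2 \in p.1))).
    rewrite -(pair_big_dep (fun Q => Q \in Vs D m.+1) (fun Q C => C \in Q) (fun _ _ => 1)) /=.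
    by apply: eq_bigr => Q _; rewrite sum1_card.
  by move=> p; rewrite inE.
apply: eq_bigr => Q; rewrite inE => /and3P [_ /eqP -> _].
by [].
Qed.

End Rec.

End Comb.

Section Transport.
Variables (T T' : finType) (f : T -> T') (injf : injective f).
Variables (v : T -> nat) (v' : T' -> nat) (r : nat).
Hypothesis hv : forall i, v' (f i) = v i.

Let fP (P : {set {set T}}) := [set f @: (B : {set T}) | B in P].

Lemma rc_img P : rc v' r (fP P) = rc v r P.
Proof.
apply/rcP/rcP => H.
  move=> B i j BP iB jB vi vj; apply: injf.
  by apply: (H (f @: B)); rewrite ?imset_f ?hv.
move=> _ _ _ /imsetP [B BP ->] /imsetP [i iB ->] /imsetP [j jB ->].
by rewrite !hv => vi vj; rewrite (H B i j).
Qed.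

Lemma V_img (D : {set T}) m P : (fP P \in Vs v' r (f @: D) m) = (P \in Vs v r D m).
Proof.
rewrite !inE imset_partition // card_imset ?rc_img //; exact: imset_inj.
Qed.

Lemma card_transport (D : {set T}) m : #|Vs v r D m| = #|Vs v' r (f @: D) m|.
Proof.
have -> : Vs v' r (f @: D) m = fP @: Vs v r D m.
  apply/setP => P'; apply/idP/imsetP; last by case=> P hP ->; rewrite V_img.
  move=> h; suff e : fP [set f @^-1: (B : {set T'}) | B in P'] = P'.
    by exists [set f @^-1: (B : {set T'}) | B in P'] => //; rewrite -V_img e.
  rewrite /fP -imset_comp -[RHS]imset_id; apply: eq_in_imset => B BP /=.
  move: h; rewrite inE => /and3P [pP _ _].
  have /subsetP sB := partitionS pP BP.
  apply/setP => y; apply/imsetP/idP => [[a]|yB]; first by rewrite inE => ? ->.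
  have := sB y yB => /imsetP [a _ ya]; exists a => //; by rewrite inE -ya.
rewrite card_in_imset // => P1 P2 _ _; apply: imset_inj; exact: imset_inj.
Qed.

End Transport.

Lemma pb_rc n r (P : {set {set 'I_n}}) : partition P [set: 'I_n] ->
  [forall i : 'I_n, forall j : 'I_n, [&& i < r, j < r & i != j] ==> (pblock P i != pblock P j)]
  = rc (@nat_of_ord n) r P.
Proof.
move=> pP; have tP := partition_trivIset pP.
have cov : forall i, i \in cover P by move=> i; rewrite (cover_partition pP) inE.
apply/forallP/rcP => H.
  move=> B i j BP iB jB vi vj; apply/eqP; apply: contraT => nij.
  have := H i => /forallP /(_ j); rewrite vi vj nij /=.
  by rewrite (def_pblock tP BP iB) (def_pblock tP BP jB) eqxx.
move=> i; apply/forallP => j; apply/implyP => /and3P [vi vj nij].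
apply: contra nij => /eqP e; apply/eqP.
apply: (H (pblock P i) i j) => //; first exact: pblock_mem.
  by rewrite mem_pblock.
by rewrite e mem_pblock.
Qed.

Lemma S_V r n m : rstirling2 r n m = #|Vs (@nat_of_ord n) r setT m|.
Proof.
rewrite /rstirling2; apply: eq_card => P; rewrite !inE.
by case pP: (partition P _) => //=; rewrite pb_rc.
Qed.

Definition Dn n := [set widen_ord (leqnSn n) i | i in [set: 'I_n]].

Lemma setT_split n : [set: 'I_n.+1] = ord_max |: Dn n.
Proof.
apply/setP => y; rewrite !inE; case: (eqVneq y ord_max) => //= ne.
apply/esym/imsetP; have yn : y < n.
  by have := ltn_ord y; rewrite ltnS leq_eqVlt => /orP [/eqP e|//]; case/eqP: ne; apply: val_inj.
by exists (Ordinal yn); rewrite ?inE //; apply: val_inj.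
Qed.

Lemma S0 r m : rstirling2 r 0 m = (m == 0).
Proof. by rewrite S_V (_ : [set: 'I_0] = set0) ?card_V0 //; apply/setP => -[]. Qed.

Lemma SS0 r n : rstirling2 r n.+1 0 = 0.
Proof. by rewrite S_V setT_split card_VS0. Qed.

Lemma SSS r n m : rstirling2 r n.+1 m.+1 =
  (if r <= n then m.+1 * rstirling2 r n m.+1 else 0) + rstirling2 r n m.
Proof.
have injw : injective (widen_ord (leqnSn n)).
  by move=> a b /(congr1 val) /= e; apply: val_inj.
rewrite !S_V setT_split card_VS.
- by rewrite !(card_transport injw (v' := @nat_of_ord n.+1)).
- by apply/imsetP => -[i _ /(congr1 val) /= e]; move: (ltn_ord i); rewrite -e ltnn.
- by move=> y /imsetP [i _ ->] /=.
Qed.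

Lemma Z1 r n m : n < m -> rstirling2 r n m = 0.
Proof.
elim: n m => [|n IH] [|m] //= h; first by rewrite S0.
rewrite SSS !IH ?muln0 //; first by case: ifP.
exact: ltnW.
Qed.

Lemma Z2 r n m : n <= r -> rstirling2 r n m = (m == n).
Proof.
elim: n m => [|n IH] m h; first by rewrite S0.
case: m => [|m]; first by rewrite SS0.
by rewrite SSS leqNgt h /= IH // ltnW.
Qed.

Lemma Z3 r d m : m < r -> rstirling2 r (r + d) m = 0.
Proof.
elim: d m => [|d IH] m h; first by rewrite addn0 Z2 // ltn_eqF.
rewrite addnS; case: m h => [|m] h; first by rewrite SS0.
by rewrite SSS leq_addr !IH ?muln0 // ltnW.
Qed.

Definition A r n k := (k + r)`! * rstirling2 r (n + r) (k + r).

Lemma A0 r k : A r 0 k = (k == 0) * r`!.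
Proof.
rewrite /A add0n Z2 ?leq_addl // (_ : (k + r == r) = (k == 0)); last by rewrite -[X in _ == X]add0n eqn_add2r.
by case: k => [|k]; rewrite ?mul1n ?muln1 ?muln0.
Qed.

Lemma AS r n k : 1 <= r ->
  A r n.+1 k = (k + r) * (A r n k + (if k is k'.+1 then A r n k' else 0)).
Proof.
case: r => [//|r] _; rewrite /A addSn; case: k => [|k].
  rewrite !add0n SSS leq_addl (addnC n) (@Z3 r.+1 n r (ltnSn r)) !addn0 mulnCA.
  by [].
rewrite addSn SSS leq_addl factS.
move: (k + r.+1) (rstirling2 _ _ _) (rstirling2 _ _ _) => s X Y; nia.
Qed.

Lemma Azero r n k : n < k -> A r n k = 0.
Proof. by move=> h; rewrite /A Z1 ?muln0 // ltn_add2r. Qed.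

Lemma fact8 j : 8 <= j -> 64 %| j`!.
Proof.
move=> h; rewrite -(subnKC h); elim: (j - 8) => [|d IH]; first by vm_compute.
by rewrite addnS factS dvdn_mull.
Qed.

Lemma A64 r n k : 8 <= k + r -> 64 %| A r n k.
Proof. by move=> h; rewrite /A dvdn_mulr // fact8. Qed.

Lemma F_mod64 r n : rfubini n r = \sum_(k < 8) A r n k %[mod 64].
Proof.
have -> : rfubini n r = \sum_(0 <= k < n.+1 + 8) A r n k.
  rewrite /rfubini (big_cat_nat _ (leq_addr 8 n.+1)) //=.
  have -> : \sum_(n.+1 <= i < n.+1 + 8) A r n i = 0.
    by rewrite big_nat big1 // => k /andP [h _]; exact: Azero.
  by rewrite addn0.
rewrite (big_cat_nat _ (_ : 8 <= n.+1 + 8)) ?leq_addl //=.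
rewrite -[\sum_(k < 8) _](big_mkord xpredT (A r n)).
have /dvdnP [q ->] : 64 %| \sum_(8 <= i < n.+1 + 8) A r n i.
  rewrite big_nat; apply: dvdn_sum => k /andP [h _].
  by apply: A64; apply: leq_trans h (leq_addr _ _).
by rewrite addnC modnMDl.
Qed.

Definition stepv r (s : seq nat) :=
  [seq ((k + r) * (nth 0 s k + (if k is k'.+1 then nth 0 s k' else 0))) %% 64 | k <- iota 0 8].
Definition vec r n := iter n (stepv r) (r`! %% 64 :: nseq 7 0).

Lemma size_vec r n : size (vec r n) = 8.
Proof. by case: n => [|n] //=; rewrite size_map size_iota. Qed.

Lemma vecE r n k : 1 <= r -> k < 8 -> nth 0 (vec r n) k = A r n k %% 64.
Proof.
move=> r1; elim: n k => [|n IH] k hk.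
  rewrite A0 /vec; case: k hk => [|k] hk; first by rewrite mul1n.
  by rewrite mul0n mod0n /=; case: k hk => [|[|[|[|[|[|[|k]]]]]]].
change (nth 0 (stepv r (vec r n)) k = A r n.+1 k %% 64).
rewrite /stepv (nth_map 0) ?size_iota // nth_iota // add0n.
rewrite AS //; case: k hk => [|k] hk.
  by rewrite IH // !addn0 modnMmr.
by rewrite !IH // 1?ltnW // -[LHS]modnMmr modnDm modnMmr.
Qed.

Lemma F_vec r n : 1 <= r -> rfubini n r = sumn (vec r n) %[mod 64].
Proof.
move=> r1; rewrite F_mod64 -modn_summ sumnE (big_nth 0) size_vec big_mkord.
by congr (_ %% _); apply: eq_bigr => k _; rewrite vecE.
Qed.

Lemma per r : 2 <= r <= 7 -> vec r 13 = vec r 5.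
Proof.
have : all (fun r => vec r 13 == vec r 5) (iota 2 6) by vm_compute.
move=> /allP H hr; apply/eqP; apply: H; rewrite mem_iota; case/andP: hr => -> /=.
by rewrite ltnS.
Qed.

Lemma vec_per r d : 2 <= r <= 7 -> vec r (d + 13) = vec r (d + 5).
Proof. by move=> hr; rewrite /vec !iterD -/(vec r 13) per. Qed.

Definition good r m n := sumn (vec r n.+2) %% 2 ^ m == sumn (vec r n) %% 2 ^ m.

Lemma chk : all (fun r => all (fun m => all (fun n => (m.-1 <= n) ==> good r m n)
  (iota 0 13)) (iota 3 4)) (iota 2 6).
Proof. by vm_compute. Qed.

Lemma good_all r m n : 2 <= r <= 7 -> 3 <= m <= 6 -> m.-1 <= n -> good r m n.
Proof.
move=> hr hm; elim/ltn_ind: n => n IH hn.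
case: (ltnP n 13) => h13.
  move: chk => /allP /(_ r) H.
  have /allP /(_ m) H2 : all (fun m => all (fun n => (m.-1 <= n) ==> good r m n)
     (iota 0 13)) (iota 3 4).
    apply: H; rewrite mem_iota; case/andP: hr => -> /=; by rewrite ltnS.
  have /allP /(_ n) H3 : all (fun n => (m.-1 <= n) ==> good r m n) (iota 0 13).
    apply: H2; rewrite mem_iota; case/andP: hm => -> /=; by rewrite ltnS.
  by move/implyP: (H3 ltac:(by rewrite mem_iota)); apply.
have [d ed] : exists d, n = d + 13 by exists (n - 13); rewrite subnK.
subst n; have := IH (d + 5).
rewrite /good -!addSn !vec_per // !addSn; apply.
  by rewrite ltn_add2l.
case/andP: hm => _ hm; apply: leq_trans (leq_addl _ _).
by case: m hm {IH hn} => [|m]; rewrite //= -ltnS.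
Qed.

Theorem theorem4p6 (r m n : nat) :
  2 <= r -> 3 <= m <= 6 -> m.-1 <= n ->
  rfubini n.+2 r = rfubini n r %[mod 2 ^ m].
Proof.
move=> r2 hm hn.
have d64 : 2 ^ m %| 64.
  by rewrite (_ : 64 = 2 ^ 6) // dvdn_exp2l //; case/andP: hm.
case: (leqP r 7) => r7.
  rewrite -(modn_dvdm (rfubini n.+2 r) d64) -(modn_dvdm (rfubini n r) d64).
  rewrite !F_vec ?(ltnW r2) // !modn_dvdm //; apply/eqP; apply: good_all => //.
  by rewrite r2.
have z : forall k, 2 ^ m %| rfubini k r.
  move=> k; apply: dvdn_trans d64 _; rewrite /rfubini big_nat.
  by apply: dvdn_sum => i _; apply: A64; apply: leq_trans r7 (leq_addl _ _).
by rewrite (eqP (z _)) (eqP (z _)).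
Qed.
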